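(* Let $G$ be the two-player game with $A_1=\{C_1,D_1\}$, $A_2=\{C_2,D_2\}$ and $\pi(C_1,C_2)=(2,2)$, $\pi(C_1,D_2)=(0,3)$, $\pi(D_1,C_2)=(3,0)$, $\pi(D_1,D_2)=(1,1)$. Then for every $p\in(0,1)$, the profile $(D_1,D_2)$ (the unique, and strict, Nash equilibrium of $G$) is not stable for the degree of observability $p$; that is, no stable configuration for degree $p$ has aggregate outcome equal to the point mass at $(D_1,D_2)$.
   Context: Preference types: $\Theta=\mathbb{R}^A$, $A=A_1\times A_2$ (extended bilinearly; $\pi_i$ likewise). $\mathcal{M}(\Theta^2)$: product distributions $\mu=\mu_1\times\mu_2$ with finitely supported marginals; $\mu(\theta)=\mu_1(\theta_1)\mu_2(\theta_2)$, $\mu_{-i}=\mu_j$ ($j\ne i$). Mutants: for nonempty $J\subseteq N=\{1,2\}$, $\tilde\theta_J\in\prod_{j\in J}(\Theta\setminus\operatorname{supp}\mu_j)$ with shares $\varepsilon\in(0,1)^{|J|}$, $\|\varepsilon\|=\max_j\varepsilon_j$; post-entry $\tilde\mu^\varepsilon_i=(1-\varepsilon_i)\mu_i+\varepsilon_i\delta_{\tilde\theta_i}$ for $i\in J$, $\mu_i$ otherwise. Partial observability with degree $p\in(0,1)$: each player independently observes opponents' types with probability $p$ and otherwise knows only $\mu_{-i}$. Strategies: $b:\operatorname{supp}\mu\to\prod_i\Delta(A_i)$ (play when observing) and $s_i:\operatorname{supp}\mu_i\to\Delta(A_i)$ (play when not observing), $s(\theta)=(s_i(\theta_i))_i$. For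 a matched profile $\theta$ and the set $T\subseteq N$ of non-observing players, the profile played is $(s(\theta)_T,b(\theta)_{-T})$. $(b,s)$ is an equilibrium if for all $\theta\in\operatorname{supp}\mu$ and $i$: $b_i(\theta)\in\arg\max_{\sigma_i}\sum_{T\subseteq N\setminus\{i\}}p^{n-1-|T|}(1-p)^{|T|}\theta_i(\sigma_i,(s_{-i}(\theta_{-i})_T,b_{-i}(\theta)_{-T}))$ and $s_i(\theta_i)\in\arg\max_{\sigma_i}\sum_{\theta'_{-i}}\mu_{-i}(\theta'_{-i})\sum_{T\subseteq N\setminus\{i\}}p^{n-1-|T|}(1-p)^{|T|}\theta_i(\sigma_i,(s_{-i}(\theta'_{-i})_T,b_{-i}(\theta_i,\theta'_{-i})_{-T}))$ (here $n=2$); $B_p(\mu)$ is the set of these; $(\mu,b,s)$ is a configuration. Aggregate outcome: $\varphi_{\mu,b,s}(a)=\sum_{\theta}\mu(\theta)\sum_{T\subseteq N}p^{n-|T|}(1-p)^{|T|}\prod_i(s(\theta)_T,b(\theta)_{-T})_i(a_i)$. Average fitness: $\Pi_{\theta_i}(\mu;b,s)=\sum_{\theta'_{-i}}\mu_{-i}(\theta'_{-i})\sum_{T\subseteq N}p^{n-|T|}(1-p)^{|T|}\pi_i(s(\theta_i,\theta'_{-i})_T,b(\theta_i,\theta'_{-i})_{-T})$. Balanced: equal average fitness of all types within each population. Nearby set: $B_p^\eta(\tilde\mu^\varepsilon;b,s)=\{(\tilde b,\tilde s)\in B_p(\tilde\mu^\varepsilon):\max_i\|\tilde b_i(\theta)-b_i(\theta)\|\le\eta,\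 \max_i\|\tilde s_i(\theta_i)-s_i(\theta_i)\|\le\eta\ \forall\theta\in\operatorname{supp}\mu\}$. $(\mu,b,s)$ is stable (for degree $p$) if balanced and for every nonempty $J$, every $\tilde\theta_J$, every $\eta>0$, there are $\bar\eta\in[0,\eta)$, $\bar\epsilon\in(0,1)$ such that for all $\varepsilon$ with $\|\varepsilon\|\in(0,\bar\epsilon)$, $B_p^{\bar\eta}(\tilde\mu^\varepsilon;b,s)\ne\emptyset$ and each of its elements satisfies (i) some $j\in J$ has $\Pi_{\theta_j}>\Pi_{\tilde\theta_j}$ (post-entry) for all $\theta_j\in\operatorname{supp}\mu_j$, or (ii) for every $i$ all types in $\operatorname{supp}\tilde\mu^\varepsilon_i$ have equal post-entry average fitness. A pure profile $a^*$ is stable for degree $p$ if the point mass at $a^*$ is the aggregate outcome of a stable configuration for $p$. *)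

(* Defs.v *)
From Stdlib Require Import Reals List.
Import ListNotations.
Open Scope R_scope.

(** Actions: C (cooperate) and D (defect); both players have action set {C,D}
    (A_1 = {C_1,D_1}, A_2 = {C_2,D_2}). A profile is a pair (a1,a2). *)
Inductive act : Type := C | D.
Definition act_eqb (x y : act) : bool :=
  match x, y with C, C | D, D => true | _, _ => false end.

Definition Theta : Type := act -> act -> R.

Definition mix : Type := act -> R.
Definition is_mix (s : mix) : Prop := 0 <= s C /\ 0 <= s D /\ s C + s D = 1.

Definition ext (th : Theta) (s1 s2 : mix) : R :=
  s1 C * s2 C * th C C + s1 C * s2 D * th C D +
  s1 D * s2 C * th D C + s1 D * s2 D * th D D.

Definition pi1 : Theta := fun a1 a2 =>
  match a1, a2 with C, C => 2 | C, D => 0 | D, C => 3 | D, D => 1 end.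
Definition pi2 : Theta := fun a1 a2 =>
  match a1, a2 with C, C => 2 | C, D => 3 | D, C => 0 | D, D => 1 end.

(** Finitely supported distributions on Theta: lists of (type, weight) pairs,
    with distinct types, positive weights, total weight 1. *)
Definition dist : Type := list (Theta * R).
Definition supp (d : dist) : list Theta := map fst d.
Definition rsum {X : Type} (f : X -> R) (l : list X) : R :=
  fold_right (fun x acc => f x + acc) 0 l.
Definition valid_dist (d : dist) : Prop :=
  NoDup (supp d) /\ Forall (fun x => 0 < snd x) d /\ rsum snd d = 1.
Definition expect (d : dist) (f : Theta -> R) : R :=
  rsum (fun x => snd x * f (fst x)) d.

(** Strategies (b,s): b_i(theta1,theta2) when observing, s_i(theta_i) when not. *)
Record strat : Type := Strat {
  b1 : Theta -> Theta -> mix;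
  b2 : Theta -> Theta -> mix;
  s1 : Theta -> mix;
  s2 : Theta -> mix }.

(** Expected subjective payoff of player 1 (type th1, matched with th2, observing)
    when playing sg; opponent observes w.p. p (plays b2), else plays s2. *)
Definition obs1 (p : R) (st : strat) (th1 th2 : Theta) (sg : mix) : R :=
  p * ext th1 sg (b2 st th1 th2) + (1 - p) * ext th1 sg (s2 st th2).
Definition obs2 (p : R) (st : strat) (th1 th2 : Theta) (sg : mix) : R :=
  p * ext th2 (b1 st th1 th2) sg + (1 - p) * ext th2 (s1 st th1) sg.
Definition unobs1 (p : R) (st : strat) (m2 : dist) (th1 : Theta) (sg : mix) : R :=
  expect m2 (fun th2 => obs1 p st th1 th2 sg).
Definition unobs2 (p : R) (st : strat) (m1 : dist) (th2 : Theta) (sg : mix) : R :=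
  expect m1 (fun th1 => obs2 p st th1 th2 sg).

Definition is_best (f : mix -> R) (sg : mix) : Prop :=
  is_mix sg /\ forall sg', is_mix sg' -> f sg' <= f sg.

Definition equilibrium (p : R) (m1 m2 : dist) (st : strat) : Prop :=
  (forall th1 th2, In th1 (supp m1) -> In th2 (supp m2) ->
     is_best (obs1 p st th1 th2) (b1 st th1 th2) /\
     is_best (obs2 p st th1 th2) (b2 st th1 th2)) /\
  (forall th1, In th1 (supp m1) -> is_best (unobs1 p st m2 th1) (s1 st th1)) /\
  (forall th2, In th2 (supp m2) -> is_best (unobs2 p st m1 th2) (s2 st th2)).

(** Sum over the set T of non-observing players, weight p^(2-|T|) (1-p)^|T|,
    of f applied to the played mixed profile (s(theta)_T, b(theta)_{-T}). *)
Definition prof_avg (p : R) (st : strat) (th1 th2 : Theta) (f : mix -> mix -> R) : R :=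
  p * p * f (b1 st th1 th2) (b2 st th1 th2) +
  p * (1 - p) * f (s1 st th1) (b2 st th1 th2) +
  (1 - p) * p * f (b1 st th1 th2) (s2 st th2) +
  (1 - p) * (1 - p) * f (s1 st th1) (s2 st th2).

Definition aggregate (p : R) (m1 m2 : dist) (st : strat) (a1 a2 : act) : R :=
  expect m1 (fun th1 => expect m2 (fun th2 =>
    prof_avg p st th1 th2 (fun x y => x a1 * y a2))).

Definition fit1 (p : R) (m2 : dist) (st : strat) (th1 : Theta) : R :=
  expect m2 (fun th2 => prof_avg p st th1 th2 (ext pi1)).
Definition fit2 (p : R) (m1 : dist) (st : strat) (th2 : Theta) : R :=
  expect m1 (fun th1 => prof_avg p st th1 th2 (ext pi2)).

Definition balanced (p : R) (m1 m2 : dist) (st : strat) : Prop :=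
  (forall x y, In x (supp m1) -> In y (supp m1) -> fit1 p m2 st x = fit1 p m2 st y) /\
  (forall x y, In x (supp m2) -> In y (supp m2) -> fit2 p m1 st x = fit2 p m1 st y).

(** Post-entry population: None = no mutant in this population (i not in J);
    Some th = mutant type th with share e. *)
Definition post (m : dist) (t : option Theta) (e : R) : dist :=
  match t with
  | None => m
  | Some th => map (fun x => (fst x, (1 - e) * snd x)) m ++ [(th, e)]
  end.

Definition epsnorm (t1 t2 : option Theta) (e1 e2 : R) : R :=
  match t1, t2 with
  | Some _, Some _ => Rmax e1 e2
  | Some _, None => e1
  | None, Some _ => e2
  | None, None => 0
  end.

Definition mdist (x y : mix) : R := Rmax (Rabs (x C - y C)) (Rabs (x D - y D)).

(** (st') in B_p^eta(post-entry mu'; b, s); closeness checked on supp mu. *)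
Definition nearby (p : R) (m1 m2 m1' m2' : dist) (st st' : strat) (eta : R) : Prop :=
  equilibrium p m1' m2' st' /\
  forall th1 th2, In th1 (supp m1) -> In th2 (supp m2) ->
    mdist (b1 st' th1 th2) (b1 st th1 th2) <= eta /\
    mdist (b2 st' th1 th2) (b2 st th1 th2) <= eta /\
    mdist (s1 st' th1) (s1 st th1) <= eta /\
    mdist (s2 st' th2) (s2 st th2) <= eta.

Definition cond_i (p : R) (m1 m2 : dist) (t1 t2 : option Theta)
    (m1' m2' : dist) (st' : strat) : Prop :=
  (exists th, t1 = Some th /\
     forall x, In x (supp m1) -> fit1 p m2' st' x > fit1 p m2' st' th) \/
  (exists th, t2 = Some th /\
     forall y, In y (supp m2) -> fit2 p m1' st' y > fit2 p m1' st' th).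

Definition stable (p : R) (m1 m2 : dist) (st : strat) : Prop :=
  equilibrium p m1 m2 st /\ balanced p m1 m2 st /\
  forall t1 t2 : option Theta,
    (t1 <> None \/ t2 <> None) ->
    (forall th, t1 = Some th -> ~ In th (supp m1)) ->
    (forall th, t2 = Some th -> ~ In th (supp m2)) ->
    forall eta, 0 < eta ->
    exists etab epsb, 0 <= etab < eta /\ 0 < epsb < 1 /\
      forall e1 e2 : R,
        (t1 <> None -> 0 < e1 < 1) ->
        (t2 <> None -> 0 < e2 < 1) ->
        0 < epsnorm t1 t2 e1 e2 < epsb ->
        (exists st', nearby p m1 m2 (post m1 t1 e1) (post m2 t2 e2) st st' etab) /\
        (forall st', nearby p m1 m2 (post m1 t1 e1) (post m2 t2 e2) st st' etab ->
           cond_i p m1 m2 t1 t2 (post m1 t1 e1) (post m2 t2 e2) st' \/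
           balanced p (post m1 t1 e1) (post m2 t2 e2) st').

Definition pure_stable (p : R) (a1 a2 : act) : Prop :=
  exists (m1 m2 : dist) (st : strat),
    valid_dist m1 /\ valid_dist m2 /\ stable p m1 m2 st /\
    forall x y, aggregate p m1 m2 st x y = (if andb (act_eqb x a1) (act_eqb y a2) then 1 else 0).

(* Main.v *)
Require Import Defs.
From Stdlib Require Import Reals.
From Stdlib Require Import Lra List Bool.
Import ListNotations.
Import Defs.
Open Scope R_scope.

Lemma expect_cons x d f : expect (x::d) f = snd x * f (fst x) + expect d f.
Proof. reflexivity. Qed.
Lemma expect_nil f : expect [] f = 0.
Proof. reflexivity. Qed.
Lemma expect_app d1 d2 f : expect (d1++d2) f = expect d1 f + expect d2 f.
Proof. induction d1 as [|a d1 IH]; simpl app.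
 rewrite expect_nil; ring. rewrite !expect_cons, IH; ring. Qed.

Lemma expect_le d f g : (forall x, In x d -> 0 <= snd x /\ f (fst x) <= g (fst x)) ->
  expect d f <= expect d g.
Proof. induction d as [|a d IH]; intros H. rewrite !expect_nil; lra.
 rewrite !expect_cons. destruct (H a (or_introl eq_refl)) as [H1 H2].
 assert (expect d f <= expect d g) by (apply IH; intros; apply H; right; auto).
 assert (snd a * f (fst a) <= snd a * g (fst a)) by (apply Rmult_le_compat_l; auto). lra. Qed.

Lemma expect_nonneg d f : (forall x, In x d -> 0 <= snd x /\ 0 <= f (fst x)) -> 0 <= expect d f.
Proof. induction d as [|a d IH]; intros H. rewrite expect_nil; lra.
 rewrite expect_cons. destruct (H a (or_introl eq_refl)) as [H1 H2].
 assert (0 <= expect d f) by (apply IH; intros; apply H; right; auto).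
 assert (0 <= snd a * f (fst a)) by (apply Rmult_le_pos; auto). lra. Qed.

Lemma expect_zero d f : (forall x, In x d -> 0 < snd x /\ 0 <= f (fst x)) ->
  expect d f = 0 -> forall x, In x d -> f (fst x) = 0.
Proof. induction d as [|a d IH]; intros H E x Hx. destruct Hx.
 rewrite expect_cons in E. destruct (H a (or_introl eq_refl)) as [H1 H2].
 assert (G1 : 0 <= expect d f) by (apply expect_nonneg; intros y Hy;
   destruct (H y (or_intror Hy)); split; lra).
 assert (G2 : 0 <= snd a * f (fst a)) by (apply Rmult_le_pos; lra).
 destruct Hx as [<-|Hx].
 - assert (G3 : snd a * f (fst a) = 0) by lra. destruct (Rmult_integral _ _ G3); lra.
 - apply IH; auto. intros; apply H; right; auto. lra. Qed.

Lemma mix_nn s a : is_mix s -> 0 <= s a.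
Proof. intros [h1 [h2 h3]]; destruct a; auto. Qed.
Definition dC : mix := fun a => match a with C => 1 | D => 0 end.
Definition dD : mix := fun a => match a with C => 0 | D => 1 end.
Lemma dC_mix : is_mix dC. Proof. unfold is_mix, dC; lra. Qed.
Lemma dD_mix : is_mix dD. Proof. unfold is_mix, dD; lra. Qed.
Definition cst (c : R) : Theta := fun _ _ => c.
Lemma ext_cst c x y : is_mix x -> is_mix y -> ext (cst c) x y = c.
Proof. intros [_ [_ hx]] [_ [_ hy]]. unfold ext, cst.
 transitivity (c * (x C + x D) * (y C + y D)); [ring | rewrite hx, hy; ring]. Qed.

Definition ismut (c : R) (th : Theta) : bool := if Req_EM_T (th C C) c then true else false.
Definition bm (c1 c2 : R) (th1 th2 : Theta) : mix :=
  if andb (ismut c1 th1) (ismut c2 th2) then dC else dD.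
Definition stp (c1 c2 : R) : strat := Strat (bm c1 c2) (bm c1 c2) (fun _ => dD) (fun _ => dD).
Lemma ismut_false c th : th C C <> c -> ismut c th = false.
Proof. unfold ismut; destruct (Req_EM_T _ _); congruence. Qed.
Lemma ismut_cst c : ismut c (cst c) = true.
Proof. unfold ismut, cst; destruct Req_EM_T; congruence. Qed.
Lemma bm_l c1 c2 th1 th2 : th1 C C <> c1 -> bm c1 c2 th1 th2 = dD.
Proof. intros h; unfold bm; rewrite ismut_false; auto. Qed.
Lemma bm_r c1 c2 th1 th2 : th2 C C <> c2 -> bm c1 c2 th1 th2 = dD.
Proof. intros h; unfold bm; rewrite (ismut_false c2 th2); auto; now rewrite andb_false_r. Qed.
Lemma bm_m c1 c2 : bm c1 c2 (cst c1) (cst c2) = dC.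
Proof. unfold bm; rewrite !ismut_cst; auto. Qed.
Lemma bm_mix c1 c2 th1 th2 : is_mix (bm c1 c2 th1 th2).
Proof. unfold bm; destruct (andb _ _); [apply dC_mix|apply dD_mix]. Qed.

Lemma rsum_cons {X : Type} (f : X -> R) a l : rsum f (a::l) = f a + rsum f l.
Proof. reflexivity. Qed.
Definition bnd (m : dist) : R := 1 + rsum (fun x : Theta * R => Rabs (fst x C C)) m.
Lemma rsum_abs_nn (m:dist) : 0 <= rsum (fun x : Theta * R => Rabs (fst x C C)) m.
Proof. induction m. unfold rsum; simpl; lra. rewrite rsum_cons; cbv beta.
 apply Rplus_le_le_0_compat; [apply Rabs_pos | exact IHm]. Qed.
Lemma bnd_lt m th : In th (supp m) -> th C C < bnd m.
Proof. unfold bnd. induction m as [|a m IH]; intros H; unfold supp in H; simpl in H. destruct H.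
 rewrite rsum_cons; cbv beta. pose proof (rsum_abs_nn m) as R1.
 pose proof (Rabs_pos (fst a C C)) as R2.
 destruct H as [<-|H].
 - pose proof (Rle_abs (fst a C C)). lra.
 - specialize (IH H). lra. Qed.

Lemma supp_in m x : In x m -> In (fst x) (supp m).
Proof. unfold supp; apply in_map. Qed.
Lemma supp_ex m th : In th (supp m) -> exists x, In x m /\ fst x = th.
Proof. unfold supp; intros H; apply in_map_iff in H; destruct H as [x [h1 h2]]; eauto. Qed.

Lemma map_part m e x : valid_dist m -> 0 < e < 1 ->
  In x (map (fun y => (fst y, (1 - e) * snd y)) m) -> 0 <= snd x /\ In (fst x) (supp m).
Proof. intros [_ [P _]] He h. rewrite Forall_forall in P.
 apply in_map_iff in h. destruct h as [y [<- hy]]. simpl. split.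
 apply Rmult_le_pos; [lra| apply Rlt_le, P; auto]. apply supp_in; auto. Qed.

Lemma post_in m T e x : valid_dist m -> 0 < e < 1 -> In x (post m (Some T) e) ->
  0 <= snd x /\ (In (fst x) (supp m) \/ fst x = T).
Proof. intros V He h. unfold post in h. apply in_app_or in h. destruct h as [h|h].
 destruct (map_part m e x V He h); auto.
 destruct h as [<-|[]]. simpl. split; [lra| auto]. Qed.

Lemma supp_post m T e th : valid_dist m -> 0 < e < 1 ->
  In th (supp (post m (Some T) e)) -> In th (supp m) \/ th = T.
Proof. intros V He h. destruct (supp_ex _ _ h) as [x [hx <-]].
 destruct (post_in m T e x V He hx); auto. Qed.

Lemma supp_post_l m T e th : In th (supp m) -> In th (supp (post m (Some T) e)).
Proof. intros h. destruct (supp_ex _ _ h) as [x [hx <-]]. unfold supp, post.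
 rewrite map_app. apply in_or_app; left. apply in_map_iff.
 exists (fst x, (1 - e) * snd x); split; [reflexivity|].
 apply (in_map (fun y => (fst y, (1 - e) * snd y))); auto. Qed.

Lemma supp_post_r m T e : In T (supp (post m (Some T) e)).
Proof. unfold supp, post. rewrite map_app. apply in_or_app; right. simpl; auto. Qed.

Lemma nonempty (m:dist) : valid_dist m -> exists th, In th (supp m).
Proof. intros [_ [_ S]]. destruct m as [|x m]. unfold rsum in S; simpl in S; lra.
 exists (fst x); simpl; left; auto. Qed.

Lemma four_zero k1 k2 k3 k4 a b c d : 0<k1 -> 0<k2 -> 0<k3 -> 0<k4 ->
  0<=a -> 0<=b -> 0<=c -> 0<=d ->
  k1*a + k2*b + k3*c + k4*d = 0 -> a = 0 /\ b = 0 /\ c = 0 /\ d = 0.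
Proof. intros.
 assert (0 <= k1*a) by (apply Rmult_le_pos; lra).
 assert (0 <= k2*b) by (apply Rmult_le_pos; lra).
 assert (0 <= k3*c) by (apply Rmult_le_pos; lra).
 assert (0 <= k4*d) by (apply Rmult_le_pos; lra).
 assert (E1: k1*a = 0) by lra. assert (E2: k2*b = 0) by lra.
 assert (E3: k3*c = 0) by lra. assert (E4: k4*d = 0) by lra.
 split; [destruct (Rmult_integral _ _ E1); lra|].
 split; [destruct (Rmult_integral _ _ E2); lra|].
 split; [destruct (Rmult_integral _ _ E3); lra|].
 destruct (Rmult_integral _ _ E4); lra. Qed.

Lemma eq_mixes p m1 m2 st th1 th2 : equilibrium p m1 m2 st -> In th1 (supp m1) ->
  In th2 (supp m2) -> is_mix (b1 st th1 th2) /\ is_mix (b2 st th1 th2) /\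
  is_mix (s1 st th1) /\ is_mix (s2 st th2).
Proof. intros [E1 [E2 E3]] h1 h2. destruct (E1 _ _ h1 h2) as [[? _] [? _]].
 destruct (E2 _ h1) as [? _]. destruct (E3 _ h2) as [? _]. auto. Qed.

Lemma agg_zero p m1 m2 st a1 a2 : 0<p<1 -> valid_dist m1 -> valid_dist m2 ->
  equilibrium p m1 m2 st -> aggregate p m1 m2 st a1 a2 = 0 ->
  forall th1 th2, In th1 (supp m1) -> In th2 (supp m2) ->
  prof_avg p st th1 th2 (fun x y => x a1 * y a2) = 0.
Proof. intros Hp V1 V2 Eq A th1 th2 h1 h2.
 assert (PN: forall t1 t2, In t1 (supp m1) -> In t2 (supp m2) ->
   0 <= prof_avg p st t1 t2 (fun x y => x a1 * y a2)).
 { intros t1 t2 g1 g2. destruct (eq_mixes _ _ _ _ _ _ Eq g1 g2) as [M1 [M2 [M3 M4]]].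
   unfold prof_avg. repeat apply Rplus_le_le_0_compat; repeat apply Rmult_le_pos;
   try lra; apply mix_nn; auto. }
 destruct V1 as [_ [P1 _]], V2 as [_ [P2 _]]. rewrite Forall_forall in P1, P2.
 destruct (supp_ex _ _ h1) as [x1 [i1 <-]]. destruct (supp_ex _ _ h2) as [x2 [i2 <-]].
 unfold aggregate in A.
 assert (Z1 := expect_zero m1 (fun t1 => expect m2 (fun t2 =>
    prof_avg p st t1 t2 (fun x y => x a1 * y a2)))).
 assert (Z := Z1 ltac:(intros x hx; split; [apply P1; auto|];
    apply expect_nonneg; intros y hy; split; [apply Rlt_le, P2; auto|];
    apply PN; apply supp_in; auto) A x1 i1).
 cbv beta in Z.
 refine (expect_zero m2 (fun t2 => prof_avg p st (fst x1) t2 (fun x y => x a1 * y a2))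
   _ Z x2 i2).
 intros y hy; split; [apply P2; auto|]. apply PN; apply supp_in; auto. Qed.

Lemma allD p m1 m2 st : 0<p<1 -> valid_dist m1 -> valid_dist m2 ->
  equilibrium p m1 m2 st ->
  (forall x y, aggregate p m1 m2 st x y =
      (if andb (act_eqb x D) (act_eqb y D) then 1 else 0)) ->
  forall th1 th2, In th1 (supp m1) -> In th2 (supp m2) ->
  b1 st th1 th2 C = 0 /\ b1 st th1 th2 D = 1 /\ b2 st th1 th2 C = 0 /\ b2 st th1 th2 D = 1 /\
  s1 st th1 C = 0 /\ s1 st th1 D = 1 /\ s2 st th2 C = 0 /\ s2 st th2 D = 1.
Proof. intros Hp V1 V2 Eq Ag th1 th2 h1 h2.
 pose proof (agg_zero p m1 m2 st C C Hp V1 V2 Eq (Ag C C) th1 th2 h1 h2) as ZCC.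
 pose proof (agg_zero p m1 m2 st C D Hp V1 V2 Eq (Ag C D) th1 th2 h1 h2) as ZCD.
 pose proof (agg_zero p m1 m2 st D C Hp V1 V2 Eq (Ag D C) th1 th2 h1 h2) as ZDC.
 destruct (eq_mixes _ _ _ _ _ _ Eq h1 h2) as [M1 [M2 [M3 M4]]].
 unfold prof_avg in ZCC, ZCD, ZDC.
 set (u := b1 st th1 th2) in *. set (v := b2 st th1 th2) in *.
 set (s := s1 st th1) in *. set (t := s2 st th2) in *.
 assert (k1 : 0 < p * p) by (apply Rmult_lt_0_compat; lra).
 assert (k2 : 0 < p * (1 - p)) by (apply Rmult_lt_0_compat; lra).
 assert (k3 : 0 < (1 - p) * p) by (apply Rmult_lt_0_compat; lra).
 assert (k4 : 0 < (1 - p) * (1 - p)) by (apply Rmult_lt_0_compat; lra).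
 apply four_zero in ZCC; auto; try (apply Rmult_le_pos; apply mix_nn; auto).
 apply four_zero in ZCD; auto; try (apply Rmult_le_pos; apply mix_nn; auto).
 apply four_zero in ZDC; auto; try (apply Rmult_le_pos; apply mix_nn; auto).
 destruct ZCC as [c1 [c2 [c3 c4]]]. destruct ZCD as [d1 [d2 [d3 d4]]].
 destruct ZDC as [e1 [e2 [e3 e4]]].
 destruct M1 as [_ [_ S1]], M2 as [_ [_ S2]], M3 as [_ [_ S3]], M4 as [_ [_ S4]].
 assert (uC : u C = 0).
 { replace (u C) with (u C * (v C + v D)) by (rewrite S2; ring). lra. }
 assert (sC : s C = 0).
 { replace (s C) with (s C * (v C + v D)) by (rewrite S2; ring). lra. }
 assert (vC : v C = 0).
 { replace (v C) with (v C * (u C + u D)) by (rewrite S1; ring). lra. }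
 assert (tC : t C = 0).
 { replace (t C) with (t C * (u C + u D)) by (rewrite S1; ring). lra. }
 repeat split; lra. Qed.

Lemma mdist_dD y eta : y C = 0 -> y D = 1 -> 0 <= eta -> mdist dD y <= eta.
Proof. intros h1 h2 he. unfold mdist, dD; cbv beta iota. rewrite h1, h2.
 replace (0 - 0) with 0 by ring. replace (1 - 1) with 0 by ring. rewrite Rabs_R0.
 unfold Rmax; destruct Rle_dec; lra. Qed.

Lemma PA_dD p c1 c2 th1 th2 f : bm c1 c2 th1 th2 = dD ->
  prof_avg p (stp c1 c2) th1 th2 f = f dD dD.
Proof. intros h. unfold prof_avg, stp; cbn [b1 b2 s1 s2]. rewrite h. ring. Qed.
Lemma PA_mut p c1 c2 f : prof_avg p (stp c1 c2) (cst c1) (cst c2) f =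
  p*p*f dC dC + p*(1-p)*f dD dC + (1-p)*p*f dC dD + (1-p)*(1-p)*f dD dD.
Proof. unfold prof_avg, stp; cbn [b1 b2 s1 s2]. rewrite bm_m. reflexivity. Qed.

Lemma e1DD : ext pi1 dD dD = 1. Proof. cbv beta iota delta [ext pi1 dD dC]; ring. Qed.
Lemma e1CC : ext pi1 dC dC = 2. Proof. cbv beta iota delta [ext pi1 dD dC]; ring. Qed.
Lemma e1DC : ext pi1 dD dC = 3. Proof. cbv beta iota delta [ext pi1 dD dC]; ring. Qed.
Lemma e1CD : ext pi1 dC dD = 0. Proof. cbv beta iota delta [ext pi1 dD dC]; ring. Qed.
Lemma e2DD : ext pi2 dD dD = 1. Proof. cbv beta iota delta [ext pi2 dD dC]; ring. Qed.
Lemma e2CC : ext pi2 dC dC = 2. Proof. cbv beta iota delta [ext pi2 dD dC]; ring. Qed.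
Lemma e2DC : ext pi2 dD dC = 0. Proof. cbv beta iota delta [ext pi2 dD dC]; ring. Qed.
Lemma e2CD : ext pi2 dC dD = 3. Proof. cbv beta iota delta [ext pi2 dD dC]; ring. Qed.

Theorem mainTheorem19 : forall p : R, 0 < p < 1 -> ~ pure_stable p D D.
Proof.
 intros p Hp [m1 [m2 [st [V1 [V2 [[Eq [_ Stab]] Ag]]]]]].
 pose proof (allD p m1 m2 st Hp V1 V2 Eq Ag) as AD.
 destruct (nonempty m1 V1) as [i1 Hi1]. destruct (nonempty m2 V2) as [i2 Hi2].
 assert (K1: forall th1 sg, In th1 (supp m1) -> is_mix sg ->
   sg C * th1 C D + sg D * th1 D D <= th1 D D).
 { intros th1 sg h1 Ms. destruct (AD th1 i2 h1 Hi2) as [a1 [a2 [a3 [a4 [a5 [a6 [a7 a8]]]]]]].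
   destruct Eq as [E1 _]. destruct (E1 th1 i2 h1 Hi2) as [[_ B] _]. specialize (B sg Ms).
   assert (X: forall sg, obs1 p st th1 i2 sg = sg C * th1 C D + sg D * th1 D D).
   { intros; unfold obs1, ext. rewrite a3, a4, a7, a8. ring. }
   rewrite !X, a1, a2 in B. lra. }
 assert (K2: forall th2 sg, In th2 (supp m2) -> is_mix sg ->
   sg C * th2 D C + sg D * th2 D D <= th2 D D).
 { intros th2 sg h2 Ms. destruct (AD i1 th2 Hi1 h2) as [a1 [a2 [a3 [a4 [a5 [a6 [a7 a8]]]]]]].
   destruct Eq as [E1 _]. destruct (E1 i1 th2 Hi1 h2) as [_ [_ B]]. specialize (B sg Ms).
   assert (X: forall sg, obs2 p st i1 th2 sg = sg C * th2 D C + sg D * th2 D D).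
   { intros; unfold obs2, ext. rewrite a1, a2, a5, a6. ring. }
   rewrite !X, a3, a4 in B. lra. }
 pose (c1 := bnd m1). pose (c2 := bnd m2).
 assert (N1: forall th, In th (supp m1) -> th C C <> c1)
   by (intros th h; pose proof (bnd_lt m1 th h); unfold c1; lra).
 assert (N2: forall th, In th (supp m2) -> th C C <> c2)
   by (intros th h; pose proof (bnd_lt m2 th h); unfold c2; lra).
 clearbody c1 c2.
 assert (Q0 : Some (cst c1) <> None \/ Some (cst c2) <> None) by (left; discriminate).
 assert (Q1 : forall th, Some (cst c1) = Some th -> ~ In th (supp m1))
   by (intros th E h; injection E; intros <-; exact (N1 _ h eq_refl)).
 assert (Q2 : forall th, Some (cst c2) = Some th -> ~ In th (supp m2))
   by (intros th E h; injection E; intros <-; exact (N2 _ h eq_refl)).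
 assert (Q3 : 0 < 1) by lra.
 specialize (Stab _ _ Q0 Q1 Q2 1 Q3).
 destruct Stab as [etab [epsb [He [Heps Hall]]]].
 pose (e := epsb / 2).
 assert (Hne: 0 < e < 1) by (unfold e; lra).
 specialize (Hall e e (fun _ => Hne) (fun _ => Hne)).
 assert (En : 0 < epsnorm (Some (cst c1)) (Some (cst c2)) e e < epsb).
 { unfold epsnorm. rewrite Rmax_left by lra. unfold e; lra. }
 specialize (Hall En). destruct Hall as [_ Hall].
 clearbody e.
 set (m1' := post m1 (Some (cst c1)) e) in *.
 set (m2' := post m2 (Some (cst c2)) e) in *.
 assert (OB1: forall th1 th2 sg, In th1 (supp m1) -> is_mix sg ->
   obs1 p (stp c1 c2) th1 th2 sg <= obs1 p (stp c1 c2) th1 th2 dD).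
 { intros th1 th2 sg h Ms.
   assert (X: forall sg, obs1 p (stp c1 c2) th1 th2 sg = sg C * th1 C D + sg D * th1 D D).
   { intros; unfold obs1, stp; cbn [b2 s2]. rewrite bm_l by (apply N1; auto).
     unfold ext, dD; cbv beta iota. ring. }
   rewrite !X. specialize (K1 th1 sg h Ms). unfold dD; cbv beta iota. lra. }
 assert (OBM1: forall th2 sg, is_mix sg -> obs1 p (stp c1 c2) (cst c1) th2 sg = c1).
 { intros th2 sg Ms. unfold obs1.
   rewrite !ext_cst by (first [assumption | apply bm_mix | apply dD_mix]). ring. }
 assert (OB2: forall th1 th2 sg, In th2 (supp m2) -> is_mix sg ->
   obs2 p (stp c1 c2) th1 th2 sg <= obs2 p (stp c1 c2) th1 th2 dD).
 { intros th1 th2 sg h Ms.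
   assert (X: forall sg, obs2 p (stp c1 c2) th1 th2 sg = sg C * th2 D C + sg D * th2 D D).
   { intros; unfold obs2, stp; cbn [b1 s1]. rewrite bm_r by (apply N2; auto).
     unfold ext, dD; cbv beta iota. ring. }
   rewrite !X. specialize (K2 th2 sg h Ms). unfold dD; cbv beta iota. lra. }
 assert (OBM2: forall th1 sg, is_mix sg -> obs2 p (stp c1 c2) th1 (cst c2) sg = c2).
 { intros th1 sg Ms. unfold obs2.
   rewrite !ext_cst by (first [assumption | apply bm_mix | apply dD_mix]). ring. }
 assert (EQ: equilibrium p m1' m2' (stp c1 c2)).
 { split; [|split].
   - intros th1 th2 h1 h2.
     apply supp_post in h1; auto. apply supp_post in h2; auto.
     change (b1 (stp c1 c2) th1 th2) with (bm c1 c2 th1 th2).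
     change (b2 (stp c1 c2) th1 th2) with (bm c1 c2 th1 th2).
     split.
     + destruct h1 as [h1| ->].
       * rewrite bm_l by (apply N1; auto). split; [apply dD_mix|].
         intros sg M. apply OB1; auto.
       * split; [apply bm_mix|]. intros sg M. rewrite !OBM1; auto. lra. apply bm_mix.
     + destruct h2 as [h2| ->].
       * rewrite bm_r by (apply N2; auto). split; [apply dD_mix|].
         intros sg M. apply OB2; auto.
       * split; [apply bm_mix|]. intros sg M. rewrite !OBM2; auto. lra. apply bm_mix.
   - intros th1 h1. apply supp_post in h1; auto.
     change (s1 (stp c1 c2) th1) with dD. split; [apply dD_mix|].
     intros sg M. unfold unobs1. apply expect_le. intros x hx.
     destruct (post_in m2 (cst c2) e x V2 Hne hx) as [w _]. split; auto.
     destruct h1 as [h1| ->].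
     + apply OB1; auto.
     + rewrite !OBM1; auto. lra. apply dD_mix.
   - intros th2 h2. apply supp_post in h2; auto.
     change (s2 (stp c1 c2) th2) with dD. split; [apply dD_mix|].
     intros sg M. unfold unobs2. apply expect_le. intros x hx.
     destruct (post_in m1 (cst c1) e x V1 Hne hx) as [w _]. split; auto.
     destruct h2 as [h2| ->].
     + apply OB2; auto.
     + rewrite !OBM2; auto. lra. apply dD_mix. }
 assert (NB: nearby p m1 m2 m1' m2' st (stp c1 c2) etab).
 { split; auto. intros th1 th2 h1 h2.
   destruct (AD th1 th2 h1 h2) as [a1 [a2 [a3 [a4 [a5 [a6 [a7 a8]]]]]]].
   change (b1 (stp c1 c2) th1 th2) with (bm c1 c2 th1 th2).
   change (b2 (stp c1 c2) th1 th2) with (bm c1 c2 th1 th2).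
   change (s1 (stp c1 c2) th1) with dD. change (s2 (stp c1 c2) th2) with dD.
   rewrite bm_l by (apply N1; auto).
   repeat split; apply mdist_dD; auto; lra. }
 assert (ep : 0 < e * p) by (apply Rmult_lt_0_compat; lra).
 assert (F1: fit1 p m2' (stp c1 c2) i1 < fit1 p m2' (stp c1 c2) (cst c1)).
 { unfold fit1, m2', post. rewrite !expect_app, !expect_cons, !expect_nil. cbn [fst snd].
   rewrite PA_mut, e1CC, e1DC, e1CD, e1DD.
   rewrite (PA_dD p c1 c2 i1 (cst c2)) by (apply bm_l, N1; auto). rewrite e1DD.
   assert (L: expect (map (fun x => (fst x, (1 - e) * snd x)) m2)
               (fun th2 => prof_avg p (stp c1 c2) i1 th2 (ext pi1)) <=
             expect (map (fun x => (fst x, (1 - e) * snd x)) m2)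
               (fun th2 => prof_avg p (stp c1 c2) (cst c1) th2 (ext pi1))).
   { apply expect_le. intros x hx. destruct (map_part m2 e x V2 Hne hx) as [w hs].
     split; auto. rewrite !PA_dD. lra. apply bm_r, N2; auto. apply bm_l, N1; auto. }
   lra. }
 assert (F2: fit2 p m1' (stp c1 c2) i2 < fit2 p m1' (stp c1 c2) (cst c2)).
 { unfold fit2, m1', post. rewrite !expect_app, !expect_cons, !expect_nil. cbn [fst snd].
   rewrite PA_mut, e2CC, e2DC, e2CD, e2DD.
   rewrite (PA_dD p c1 c2 (cst c1) i2) by (apply bm_r, N2; auto). rewrite e2DD.
   assert (L: expect (map (fun x => (fst x, (1 - e) * snd x)) m1)
               (fun th1 => prof_avg p (stp c1 c2) th1 i2 (ext pi2)) <=
             expect (map (fun x => (fst x, (1 - e) * snd x)) m1)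
               (fun th1 => prof_avg p (stp c1 c2) th1 (cst c2) (ext pi2))).
   { apply expect_le. intros x hx. destruct (map_part m1 e x V1 Hne hx) as [w hs].
     split; auto. rewrite !PA_dD. lra. apply bm_l, N1; auto. apply bm_r, N2; auto. }
   lra. }
 destruct (Hall (stp c1 c2) NB) as [Ci | Bal].
 - destruct Ci as [[th [E Hx]] | [th [E Hx]]]; injection E; intros <-.
   + specialize (Hx i1 Hi1). lra.
   + specialize (Hx i2 Hi2). lra.
 - destruct Bal as [B1 _].
   specialize (B1 i1 (cst c1) (supp_post_l m1 (cst c1) e i1 Hi1) (supp_post_r m1 (cst c1) e)).
   lra.
Qed.
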